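(* Let $(M, d)$ be a complete pointed metric space. Then the set $\check{M} := \{\check{x} : x \in M\}$ is a closed subset of the dual Banach space $(M^e)^*$, where $\check{x}(f)=f(x)$ for $f\in M^e$.
   Context: A pointed metric space is a metric space with a distinguished point $0$. $M^e$ denotes the normed space $E_c(M,\mathbb{R})$ of all continuous functions $f:M\to\mathbb{R}$ for which there is $k>0$ with $|f(x)|\le k\,d(x,0)$ for all $x\in M$, with norm $\|f\|_e=\sup_{x\in M,x\ne0}|f(x)|/d(x,0)$; $(M^e)^*$ is its dual with the operator norm. *)

(* Defs.v *)
From mathcomp Require Import all_boot all_order all_algebra.
From mathcomp Require Import boolp classical_sets reals.
Set Implicit Arguments. Unset Strict Implicit. Unset Printing Implicit Defensive.
Import Order.TTheory GRing.Theory Num.Theory.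
Local Open Scope classical_set_scope.
Local Open Scope ring_scope.

Section Defs.
Variables (R : realType) (T : Type).

Definition is_metric (d : T -> T -> R) : Prop :=
  (forall x y, 0 <= d x y) /\
  (forall x y, d x y = 0 <-> x = y) /\
  (forall x y, d x y = d y x) /\
  (forall x y z, d x z <= d x y + d y z).

Definition cauchy_seq (d : T -> T -> R) (u : nat -> T) : Prop :=
  forall eps : R, 0 < eps -> exists N : nat, forall m n : nat,
    (N <= m)%N -> (N <= n)%N -> d (u m) (u n) < eps.

Definition converges_to (d : T -> T -> R) (u : nat -> T) (l : T) : Prop :=
  forall eps : R, 0 < eps -> exists N : nat, forall n : nat,
    (N <= n)%N -> d (u n) l < eps.

Definition complete_metric (d : T -> T -> R) : Prop :=
  forall u : nat -> T, cauchy_seq d u -> exists l, converges_to d u l.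

Definition dcontinuous (d : T -> T -> R) (f : T -> R) : Prop :=
  forall x (eps : R), 0 < eps -> exists delta : R, 0 < delta /\
    forall y, d x y < delta -> `|f y - f x| < eps.

Definition in_Me (d : T -> T -> R) (x0 : T) (f : T -> R) : Prop :=
  dcontinuous d f /\ exists k : R, 0 < k /\ forall x, `|f x| <= k * d x x0.

Definition norm_e (d : T -> T -> R) (x0 : T) (f : T -> R) : R :=
  sup [set `|f x| / d x x0 | x in [set x | x <> x0]].

(* (M^e)^* : bounded linear functionals on M^e (functionals are represented
   as maps (T -> R) -> R; only their values on M^e matter) *)
Definition in_dual (d : T -> T -> R) (x0 : T) (phi : (T -> R) -> R) : Prop :=
  (forall (a : R) (f g : T -> R), in_Me d x0 f -> in_Me d x0 g ->
      phi (fun x => a * f x + g x) = a * phi f + phi g) /\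
  (exists C : R, forall f, in_Me d x0 f -> `|phi f| <= C * norm_e d x0 f).

Definition op_norm (d : T -> T -> R) (x0 : T) (phi : (T -> R) -> R) : R :=
  sup [set `|phi f| | f in [set f | in_Me d x0 f /\ norm_e d x0 f <= 1]].

Definition check_pt (x : T) : (T -> R) -> R := fun f => f x.

(* the set {x^check : x in M}, as a predicate on (M^e)^* (equality on M^e) *)
Definition in_checkM (d : T -> T -> R) (x0 : T) (phi : (T -> R) -> R) : Prop :=
  exists x : T, forall f, in_Me d x0 f -> phi f = check_pt x f.

Definition closed_in_dual (d : T -> T -> R) (x0 : T)
    (S : ((T -> R) -> R) -> Prop) : Prop :=
  forall phi, in_dual d x0 phi ->
    (forall eps : R, 0 < eps -> exists psi, in_dual d x0 psi /\ S psi /\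
        op_norm d x0 (fun f => phi f - psi f) < eps) ->
    S phi.

End Defs.

(* Main.v *)
Require Import Defs.
From mathcomp Require Import all_boot all_order all_algebra.
From mathcomp Require Import boolp classical_sets reals.
From mathcomp Require Import lra.
Import Order.TTheory GRing.Theory Num.Theory.
Local Open Scope classical_set_scope.
Local Open Scope ring_scope.

Section Helpers.
Variables (R : realType) (T : Type) (d : T -> T -> R) (x0 : T).
Hypothesis Hm : is_metric d.

Lemma dpos z : z <> x0 -> 0 < d z x0.
Proof.
case: Hm => h0 [hz _] zx; rewrite lt_neqAle h0 andbT eq_sym.
by apply/eqP => /hz.
Qed.

Lemma norm_le1 f : (forall z, `|f z| <= d z x0) -> norm_e d x0 f <= 1.
Proof.
move=> hf; rewrite /norm_e.
set E := [set _ | _ in _].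
have [ne|e0] := pselect (E !=set0).
  apply: ge_sup => // _ [z zx <-].
  by rewrite ler_pdivrMr ?dpos // mul1r.
have -> : E = set0.
  by apply/seteqP; split => // y Ey; exfalso; apply: e0; exists y.
by rewrite sup0 ler01.
Qed.

Lemma norm_ge0 f : in_Me d x0 f -> 0 <= norm_e d x0 f.
Proof.
move=> [_ [k [k0 hk]]]; rewrite /norm_e.
set E := [set _ | _ in _].
have [[y Ey]|e0] := pselect (E !=set0).
  have ub : has_ubound E.
    exists k => _ [z zx <-]; rewrite ler_pdivrMr ?dpos //.
  apply: le_trans (ub_le_sup ub Ey).
  by case: Ey => z zx <-; rewrite divr_ge0 // ltW // dpos.
have -> : E = set0.
  by apply/seteqP; split => // y Ey; exfalso; apply: e0; exists y.
by rewrite sup0.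
Qed.

Lemma diff_bound phi psi f : in_dual d x0 phi -> in_dual d x0 psi ->
  in_Me d x0 f -> norm_e d x0 f <= 1 ->
  `|phi f - psi f| <= op_norm d x0 (fun g => phi g - psi g).
Proof.
move=> [_ [C1 h1]] [_ [C2 h2]] hf hn.
apply: ub_le_sup; last by exists f.
exists (`|C1| + `|C2|) => _ [g [hg hgn] <-].
have n0 := @norm_ge0 g hg.

have a1 := h1 g hg; have a2 := h2 g hg.
have b1 := ler_norm C1; have b2 := ler_norm C2.
have c1 : C1 * norm_e d x0 g <= `|C1|.
  apply: le_trans (_ : `|C1| * norm_e d x0 g <= _); first by rewrite ler_wpM2r.
  by rewrite ler_piMr.
have c2 : C2 * norm_e d x0 g <= `|C2|.
  apply: le_trans (_ : `|C2| * norm_e d x0 g <= _); first by rewrite ler_wpM2r.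
  by rewrite ler_piMr.
apply: le_trans (ler_normB _ _) _; lra.
Qed.

End Helpers.

Lemma small_inv (R : realType) (eps : R) : 0 < eps ->
  exists N : nat, forall n : nat, (N <= n)%N -> n.+1%:R^-1 < eps.
Proof.
move=> e0; exists (Num.Def.archi_bound eps^-1) => n hn.
have ie : 0 < eps^-1 by rewrite invr_gt0.
have h := archi_boundP (ltW ie).
have h2 : (Num.Def.archi_bound eps^-1)%:R <= n%:R :> R by rewrite ler_nat.
have h3 : eps^-1 < n.+1%:R.
  apply: (lt_le_trans h); apply: (le_trans h2); rewrite ler_nat; exact: leqnSn.
rewrite -(invrK eps) ltf_pV2 ?posrE //; exact: (lt_trans ie).
Qed.

Theorem mainTheorem12 (R : realType) (T : Type) (d : T -> T -> R) (x0 : T) :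
  is_metric d -> complete_metric d ->
  closed_in_dual d x0 (in_checkM d x0).
Proof.
move=> Hm Hc phi Hphi Happ.
have [h0 [hz [hs htr]]] := Hm.
have /choice [xs Hxs] : forall n : nat, exists x, exists psi, in_dual d x0 psi /\
   (forall f, in_Me d x0 f -> psi f = f x) /\
   op_norm d x0 (fun f => phi f - psi f) < n.+1%:R^-1.
  move=> n.
  have p : 0 < n.+1%:R^-1 :> R by rewrite invr_gt0 ltr0Sn.
  have [psi [Hpsi [[x Hx] Hn]]] := Happ (n.+1%:R^-1) p.
  by exists x, psi.
have key : forall n f, in_Me d x0 f -> (forall z, `|f z| <= d z x0) ->
   `|phi f - f (xs n)| < n.+1%:R^-1.
  move=> n f hf hb; have [psi [Hpsi [Hx Hn]]] := Hxs n.
  rewrite -Hx //; apply: le_lt_trans Hn; apply: diff_bound => //.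
  exact: norm_le1.
have Hcau : cauchy_seq d xs.
  move=> eps e0.
  have p : 0 < eps / 2 by rewrite divr_gt0.
  have [N HN] := small_inv _ _ p.
  exists N => m n hm hn.
  pose h := fun z => d z (xs m) - d x0 (xs m).
  have hM : in_Me d x0 h.
    split.
      move=> x e e0'; exists e; split => // y hy.
      rewrite /h ltr_norml; apply/andP.
      have := htr y x (xs m); have := htr x y (xs m); have := hs y x; lra.
    exists 1; split => // z; rewrite mul1r /h ler_norml; apply/andP.
    have := htr z x0 (xs m); have := htr x0 z (xs m); have := hs x0 z; lra.
  have hb : forall z, `|h z| <= d z x0.
    move=> z; rewrite /h ler_norml; apply/andP.
    have := htr z x0 (xs m); have := htr x0 z (xs m); have := hs x0 z; lra.
  have k1 := key n h hM hb; have k2 := key m h hM hb.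
  have a1 := HN n hn; have a2 := HN m hm.
  have e1 : d (xs m) (xs m) = 0 by apply/hz.
  move: k1 k2; rewrite /h e1 !ltr_norml => /andP[k1 k1'] /andP[k2 k2'].
  rewrite hs; set P := phi _ in k1 k1' k2 k2'; set a := n.+1%:R^-1 in a1 k1 k1'; set b := m.+1%:R^-1 in a2 k2 k2'. lra.
have [x Hx] := Hc xs Hcau.
exists x => f hf; rewrite /check_pt.
have [hcont [k [k0 hk]]] := hf.
have H0 : in_Me d x0 (fun _ => 0).
  split; first by move=> ? e e0; exists 1; split => // y _; rewrite subrr normr0.
  by exists 1; split => // z; rewrite normr0 mul1r h0.
have phi0 : phi (fun _ => 0) = 0.
  have L := Hphi.1 1 (fun _ => 0) (fun _ => 0) H0 H0.
  move: L => /=; rewrite mul1r addr0 => L; lra.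
have Lg := Hphi.1 k^-1 f (fun _ => 0) hf H0.
move: Lg => /=; rewrite phi0 addr0 => Lg.
pose g := fun z => k^-1 * f z + 0.
have kk : 0 <= k^-1 by rewrite invr_ge0 ltW.
have Hg : in_Me d x0 g.
  split.
    move=> y e e0.
    have [del [dl0 hd]] := hcont y (e * k) (mulr_gt0 e0 k0).
    exists del; split => // z hyz; have := hd z hyz.
    rewrite /g !addr0 -mulrBr normrM ger0_norm //.
    by move=> H; rewrite mulrC ltr_pdivrMr.
  exists 1; split => // z; rewrite mul1r /g addr0 normrM ger0_norm //.
  by rewrite mulrC ler_pdivrMr // mulrC; exact: hk.
have Hgb : forall z, `|g z| <= d z x0.
  move=> z; rewrite /g addr0 normrM ger0_norm //.
  by rewrite mulrC ler_pdivrMr // mulrC; exact: hk.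
suff H : forall e, 0 < e -> `|phi f - f x| < e.
  apply/eqP; rewrite -subr_eq0 -normr_le0 leNgt; apply/negP => D0.
  by have := H _ D0; rewrite ltxx.
move=> e e0.
have p : 0 < e / 2 by rewrite divr_gt0.
have [del [dl0 hd]] := hcont x (e / 2) p.
have [N2 HN2] := Hx del dl0.
have p2 : 0 < k^-1 * (e / 2) by rewrite mulr_gt0 ?invr_gt0.
have [N1 HN1] := small_inv _ _ p2.
pose n := maxn N1 N2.
have a1 := HN1 n (leq_maxl _ _); have a2 := HN2 n (leq_maxr _ _).
rewrite hs in a2.
have a3 := hd (xs n) a2.
have a4 := key n g Hg Hgb.
move: a4; rewrite /g Lg addr0 -mulrBr normrM ger0_norm // => a4.
have a5 : `|phi f - f (xs n)| < e / 2.
  by rewrite -(ltr_pM2l (x := k^-1)) ?invr_gt0 //; exact: lt_trans a4 a1.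
have := ler_distD (f (xs n)) (phi f) (f x); lra.
Qed.
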